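(* Let $\Phi$ be a channel matrix whose rows $P^1,P^2,P^3\in\Delta^n$ are in general position, let $Q^0$ be the equidistant point from $P^1,P^2,P^3$ and $\boldsymbol\lambda^0$ its barycentric coordinate about $P^1,P^2,P^3$. If $\lambda^0_1,\lambda^0_2,\lambda^0_3\ge0$, then the output distribution achieving the channel capacity is $Q^\ast=Q^0$ and the channel capacity is $C=D(P^1\|Q^0)$.
   Context: $\Delta^n=\{Q:Q_j>0,\sum_jQ_j=1\}$, $\bar\Delta^m=\{\boldsymbol\lambda:\lambda_i\ge0,\sum_i\lambda_i=1\}$; $D(Q\|Q')=\sum_jQ_j\log(Q_j/Q'_j)$. Rows are in general position if $P^2-P^1,\dots,P^m-P^1$ are linearly independent. $L(S^1,\dots,S^r)=\{\sum_i\lambda_iS^i:\sum_i\lambda_i=1\}\cap\Delta^n$. The barycentric coordinate of $Q\in L(P^1,\dots,P^m)$ is the unique $\boldsymbol\lambda$ with $\sum_i\lambda_i=1$, $Q=\sum_i\lambda_iP^i$. The equidistant point is the unique $Q^0\in L(P^1,\dots,P^m)$ with $D(P^1\|Q^0)=\dots=D(P^m\|Q^0)$. Mutual information $I(\boldsymbol\lambda,\Phi)=\sum_{i,j}\lambda_iP^i_j\log(P^i_j/Q_j)$ with $Q=\boldsymbol\lambda\Phi$; capacity $C=\max_{\boldsymbol\lambda\in\bar\Delta^m}I(\boldsymbol\lambda,\Phi)$; the capacity-achieving output distribution is $Q^\ast=\boldsymbol\lambda^\ast\Phi$ for a maximizer $\boldsymbol\lambda^\ast$ (unique). *)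

(* Defs.v *)
From HB Require Import structures.
From mathcomp Require Import all_boot all_order all_algebra.
From mathcomp Require Import reals exp.
Set Implicit Arguments. Unset Strict Implicit. Unset Printing Implicit Defensive.
Import Order.TTheory GRing.Theory Num.Theory.
Local Open Scope ring_scope.

Section Defs.
Variable R : realType.

Definition in_open_simplex (n : nat) (Q : 'rV[R]_n) : Prop :=
  (forall j, 0 < Q 0 j) /\ \sum_j Q 0 j = 1.

Definition in_closed_simplex (m : nat) (l : 'rV[R]_m) : Prop :=
  (forall i, 0 <= l 0 i) /\ \sum_i l 0 i = 1.

Definition KL (n : nat) (Q Q' : 'rV[R]_n) : R :=
  \sum_j Q 0 j * ln (Q 0 j / Q' 0 j).

Definition channel_matrix (m n : nat) (Phi : 'M[R]_(m, n)) : Prop :=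
  forall i, in_open_simplex (row i Phi).

Definition general_position (m n : nat) (Phi : 'M[R]_(m.+1, n)) : Prop :=
  forall c : 'rV[R]_m,
    \sum_(i < m) c 0 i *: (row (lift ord0 i) Phi - row ord0 Phi) = 0 ->
    c = 0.

Definition affine_comb (m n : nat) (Phi : 'M[R]_(m, n)) (l : 'rV[R]_m)
  (Q : 'rV[R]_n) : Prop :=
  \sum_i l 0 i = 1 /\ Q = l *m Phi.

Definition in_affine_set (m n : nat) (Phi : 'M[R]_(m, n)) (Q : 'rV[R]_n) : Prop :=
  (exists l, affine_comb Phi l Q) /\ in_open_simplex Q.

Definition equidistant_prop (m n : nat) (Phi : 'M[R]_(m, n)) (Q : 'rV[R]_n) : Prop :=
  in_affine_set Phi Q /\ forall i i', KL (row i Phi) Q = KL (row i' Phi) Q.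

Definition is_equidistant_point (m n : nat) (Phi : 'M[R]_(m, n)) (Q0 : 'rV[R]_n) : Prop :=
  equidistant_prop Phi Q0 /\ forall Q, equidistant_prop Phi Q -> Q = Q0.

Definition is_barycentric (m n : nat) (Phi : 'M[R]_(m, n)) (Q : 'rV[R]_n)
  (l : 'rV[R]_m) : Prop :=
  affine_comb Phi l Q /\ forall l', affine_comb Phi l' Q -> l' = l.

Definition mutual_info (m n : nat) (l : 'rV[R]_m) (Phi : 'M[R]_(m, n)) : R :=
  \sum_i \sum_j l 0 i * Phi i j * ln (Phi i j / (l *m Phi) 0 j).

End Defs.

(* Main.v *)
Require Import Defs.
From HB Require Import structures.
From mathcomp Require Import all_boot all_order all_algebra.
From mathcomp Require Import reals exp ring lra.
Import Order.TTheory GRing.Theory Num.Theory.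
Local Open Scope ring_scope.
Section L.
Variable R : realType.
Implicit Types m n : nat.

Lemma Pp m n (Phi : 'M[R]_(m,n)) : channel_matrix Phi -> forall i j, 0 < Phi i j.
Proof. by move=> HP i j; have [h _] := HP i; have := h j; rewrite mxE. Qed.

Lemma Q_pos m n (Phi : 'M[R]_(m,n)) l : channel_matrix Phi -> in_closed_simplex l ->
  forall j, 0 < (l *m Phi) 0 j.
Proof.
move=> HP [l0 l1] j; rewrite mxE.
have Pp i : 0 < Phi i j by apply: Pp.
rewrite lt_def sumr_ge0 ?andbT; last by move=> i _; rewrite mulr_ge0 // ltW.
apply/eqP => /psumr_eq0P H.
have : \sum_i l 0 i = 0.
  apply: big1 => i _; have /eqP := H (fun i _ => mulr_ge0 (l0 i) (ltW (Pp i))) i isT.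
  by rewrite mulf_eq0 (gt_eqF (Pp i)) orbF => /eqP.
by rewrite l1 => /eqP; rewrite oner_eq0.
Qed.

Lemma Q_sum m n (Phi : 'M[R]_(m,n)) l : channel_matrix Phi -> in_closed_simplex l ->
  \sum_j (l *m Phi) 0 j = 1.
Proof.
move=> HP [l0 l1].
under eq_bigr do rewrite mxE.
rewrite exchange_big /= -l1; apply: eq_bigr => i _.
rewrite -mulr_sumr; have [_ h] := HP i.
rewrite -[RHS]mulr1 -h; congr (_ * _); apply: eq_bigr => j _; by rewrite mxE.
Qed.
Lemma ln_le_sub1 (x : R) : 0 < x -> ln x <= x - 1.
Proof.
move=> x0; have := expR_ge1Dx (ln x); rewrite lnK ?posrE //.
by rewrite lerBrDl addrC.
Qed.
Lemma ln_eq_sub1 (x : R) : 0 < x -> ln x = x - 1 -> x = 1.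
Proof.
move=> x0 H; set s := Num.sqrt x.
have s0 : 0 < s by rewrite sqrtr_gt0.
have xs : x = s * s by rewrite -expr2 sqr_sqrtr // ltW.
have := @ln_le_sub1 s s0.
rewrite xs lnM ?posrE // in H => Hs.
have : (s - 1) ^+ 2 <= 0.
  rewrite expr2; nra.
move=> h; have : (s - 1) ^+ 2 = 0 by apply/eqP; rewrite eq_le h sqr_ge0.
move/eqP; rewrite sqrf_eq0 subr_eq0 => /eqP s1.
by rewrite xs s1 mulr1.
Qed.

Lemma gibbs n (Q Q' : 'rV[R]_n) : (forall j, 0 < Q 0 j) -> (forall j, 0 < Q' 0 j) ->
  \sum_j Q 0 j = 1 -> \sum_j Q' 0 j = 1 ->
  0 <= KL Q Q' /\ (KL Q Q' = 0 -> Q = Q').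
Proof.
move=> Qp Q'p s1 s1'.
pose t j := Q' 0 j - Q 0 j - Q 0 j * ln (Q' 0 j / Q 0 j).
have t0 j : 0 <= t j.
  have x0 : 0 < Q' 0 j / Q 0 j by rewrite divr_gt0.
  have := @ln_le_sub1 _ x0; rewrite /t subr_ge0 => h.
  have -> : Q' 0 j - Q 0 j = Q 0 j * (Q' 0 j / Q 0 j - 1).
    by field; rewrite gt_eqF.
  by rewrite ler_wpM2l // ltW.
have KLt : KL Q Q' = \sum_j t j.
  rewrite /KL /t !sumrB s1 s1' subrr sub0r -sumrN; apply: eq_bigr => j _.
  rewrite !ln_div ?posrE //; ring.
split; first by rewrite KLt sumr_ge0.
rewrite KLt => /psumr_eq0P H; apply/rowP => j.
have x0 : 0 < Q' 0 j / Q 0 j by rewrite divr_gt0.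
have Hj := H (fun j _ => t0 j) j isT.
have : ln (Q' 0 j / Q 0 j) = Q' 0 j / Q 0 j - 1.
  have q0 : Q 0 j != 0 by rewrite gt_eqF.
  apply: (mulfI q0); rewrite /t in Hj.
  have -> : Q 0 j * (Q' 0 j / Q 0 j - 1) = Q' 0 j - Q 0 j by field.
  by apply/eqP; rewrite eq_sym -subr_eq0; apply/eqP.
move/(@ln_eq_sub1 _ x0) => e.
have q0 : Q 0 j != 0 by rewrite gt_eqF.
have : Q' 0 j = Q 0 j by rewrite -[Q' 0 j](divfK q0) e mul1r.
by move=> ->.
Qed.
Arguments Pp {m n Phi}.
Arguments Q_pos {m n Phi l}.
Arguments Q_sum {m n Phi l}.
Lemma mi_identity m n (Phi : 'M[R]_(m,n)) l (Q' : 'rV[R]_n) :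
  channel_matrix Phi -> in_closed_simplex l -> (forall j, 0 < Q' 0 j) ->
  mutual_info l Phi = \sum_i l 0 i * KL (row i Phi) Q' - KL (l *m Phi) Q'.
Proof.
move=> HP hl Q'p.
have Qp := Q_pos HP hl; have Pq := Pp HP.
rewrite /KL /mutual_info.
have -> : \sum_j (l *m Phi) 0 j * ln ((l *m Phi) 0 j / Q' 0 j) =
   \sum_i \sum_j l 0 i * Phi i j * ln ((l *m Phi) 0 j / Q' 0 j).
  rewrite exchange_big /=; apply: eq_bigr => j _.
  by rewrite -mulr_suml; congr (_ * _); rewrite mxE.
rewrite -sumrB; apply: eq_bigr => i _.
rewrite mulr_sumr -sumrB; apply: eq_bigr => j _.
rewrite [row i Phi 0 j]mxE !ln_div ?posrE ?Qp ?Pq ?Q'p //.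
set a := ln _; set b := ln _; set c := ln _; ring.
Qed.
End L.
Arguments mi_identity {R m n Phi l Q'}.
Arguments gibbs {R n Q Q'}.
Arguments Q_pos {R m n Phi l}.
Arguments Q_sum {R m n Phi l}.

Theorem theorem15 (R : realType) (n : nat) (Phi : 'M[R]_(3, n))
    (Q0 : 'rV[R]_n) (l0 : 'rV[R]_3) :
  channel_matrix Phi ->
  general_position Phi ->
  is_equidistant_point Phi Q0 ->
  is_barycentric Phi Q0 l0 ->
  (forall i, 0 <= l0 0 i) ->
  (* C = max_{l in closed simplex} I(l, Phi) = D(P^1 || Q0) *)
  ((forall l, in_closed_simplex l -> mutual_info l Phi <= KL (row 0 Phi) Q0) /\
   (exists l, in_closed_simplex l /\ mutual_info l Phi = KL (row 0 Phi) Q0)) /\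
  (* the capacity-achieving output distribution is Q* = Q0 *)
  (forall l, in_closed_simplex l -> mutual_info l Phi = KL (row 0 Phi) Q0 ->
     l *m Phi = Q0).
Proof.
move=> HP _ [[[_ [Q0p Q0s]] Heq] _] [[l0s l0Q] _] l0p.
have key l : in_closed_simplex l ->
    mutual_info l Phi = KL (row 0 Phi) Q0 - KL (l *m Phi) Q0.
  move=> hl; rewrite (mi_identity HP hl Q0p); congr (_ - _).
  have -> : \sum_i l 0 i * KL (row i Phi) Q0 = \sum_i l 0 i * KL (row 0 Phi) Q0.
    by apply: eq_bigr => i _; rewrite (Heq i 0).
  by rewrite -mulr_suml (proj2 hl) mul1r.
have G l : in_closed_simplex l ->
    0 <= KL (l *m Phi) Q0 /\ (KL (l *m Phi) Q0 = 0 -> l *m Phi = Q0).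
  move=> hl; exact: gibbs (Q_pos HP hl) Q0p (Q_sum HP hl) Q0s.
have hl0 : in_closed_simplex l0 by [].
split; [split|].
- move=> l hl; rewrite key //; have [g _] := G l hl; lra.
- exists l0; split => //; rewrite key // -l0Q.
  suff -> : KL Q0 Q0 = 0 by rewrite subr0.
  by rewrite /KL big1 // => j _; rewrite divff ?gt_eqF // ln1 mulr0.
- move=> l hl; rewrite key // => h; apply: (proj2 (G l hl)); lra.
Qed.
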